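(* Let $f:\mathbb{R}_+\to\mathbb{R}$ be a real-valued function with $f\in GM$. If the improper integral $\int_0^\infty f(t)\,dt$ converges, then $t f(t)\to 0$ as $t\to\infty$.
   Context: $\mathbb{R}_+=[0,\infty)$. All functions $f:\mathbb{R}_+\to\mathbb{C}$ considered are locally integrable, locally of bounded variation on $(0,\infty)$, and satisfy $f(t)\to 0$ as $t\to\infty$. Integrals over infinite intervals (and integrals $\int_0^\infty$) are understood as improper Riemann (Riemann–Stieltjes) integrals. Such an $f$ is called general monotone, written $f\in GM$, if there exist constants $C>1$ and $\lambda>1$ such that for every $x>0$, $$\int_x^{2x}|df(t)|\le C\int_{x/\lambda}^{\lambda x}\frac{|f(t)|}{t}\,dt,$$ where $|df|$ denotes the total variation measure of $f$. *)

(* Defs.v *)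
From Stdlib Require Import Reals Lra List Sorting.Sorted.
From Coquelicot Require Import Coquelicot.
Open Scope R_scope.

Fixpoint var_sum (f : R -> R) (x : R) (l : list R) : R :=
  match l with
  | nil => 0
  | y :: l' => Rabs (f y - f x) + var_sum f y l'
  end.

Definition is_partition (a b : R) (l : list R) : Prop :=
  Sorted Rle (a :: l) /\ last (a :: l) a = b.

(* Total variation of f on [a,b], i.e. int_a^b |df|, as an extended real. *)
Definition total_variation (f : R -> R) (a b : R) : Rbar :=
  Lub_Rbar (fun s => exists l, is_partition a b l /\ s = var_sum f a l).

Definition bounded_variation (f : R -> R) (a b : R) : Prop :=
  exists M, forall l, is_partition a b l -> var_sum f a l <= M.

(* Standing assumptions on f : R_+ -> R (values on t < 0 are irrelevant). *)
Definition standing_assumptions (f : R -> R) : Prop :=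
  (* locally integrable on R_+ = [0,oo): integrable on every [0,b]
     (improper Riemann integral of |f| at 0+) *)
  (forall b, 0 < b -> exists l, is_RInt_gen (fun t => Rabs (f t)) (at_right 0) (at_point b) l)
  /\ (forall a b, 0 < a -> a <= b -> bounded_variation f a b)
  /\ filterlim f (Rbar_locally p_infty) (locally 0).

Definition GM (f : R -> R) : Prop :=
  standing_assumptions f /\
  exists C lam : R, 1 < C /\ 1 < lam /\
    forall x, 0 < x ->
      Rbar_le (total_variation f x (2 * x))
              (Finite (C * RInt (fun t => Rabs (f t) / t) (x / lam) (lam * x))).

(* Main.v *)
Require Import Defs.
From Stdlib Require Import Reals Lra Lia Classical Arith List Sorting.Sorted.
From Coquelicot Require Import Coquelicot.
Open Scope R_scope.

Lemma pow2_ge n : INR n <= 2 ^ n.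
Proof.
induction n. simpl; lra. rewrite S_INR. simpl. pose proof (pow_R1_Rle 2 n). lra.
Qed.

Lemma pow2_unb X : exists n, X < 2 ^ n.
Proof.
destruct (INR_unbounded X) as [n Hn]. exists n. pose proof (pow2_ge n). lra.
Qed.

Lemma chain (m : R -> R) (A E r : R) :
 0 < E -> 1 <= r -> 0 < A ->
 (forall y, A <= y -> m y <= y) ->
 (forall y, r*A <= y -> 2*E < m y -> exists y', y/r <= y' <= r*y /\ 2*r*m y <= m y') ->
 exists Y, forall y, Y <= y -> m y <= 2*E.
Proof.
intros HE Hr HA Hmy Hstep.
apply NNPP; intros Hno.
assert (Hbig : forall Y, exists y, Y <= y /\ 2*E < m y).
{ intros Y. apply NNPP; intros H. apply Hno. exists Y. intros y Hy.
  apply Rnot_lt_le. intros H'. apply H. exists y; split; assumption. }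
destruct (pow2_unb (r*A/(2*E))) as [n0 Hn0].
assert (Hn0' : r*A <= 2^n0 * (2*E)).
{ apply Rmult_lt_compat_r with (r := 2*E) in Hn0; [|lra].
  unfold Rdiv in Hn0. rewrite Rmult_assoc, Rinv_l in Hn0; lra. }
assert (Hrn0 : 1 <= r^n0) by (apply pow_R1_Rle; lra).
destruct (Hbig (r*A*r^n0)) as [y0 [Hy0 Hmy0]].
assert (HrA : 0 < r*A) by nra.
assert (Claim : forall n, exists y, r*A <= y /\ y <= r^n*y0 /\ y0 <= r^n*y /\ (2*r)^n * m y0 <= m y).
{ induction n as [|n IH].
  - exists y0. simpl. repeat split; try lra. nra.
  - destruct IH as [y [H1 [H2 [H3 H4]]]].
    assert (Hp : 1 <= (2*r)^n) by (apply pow_R1_Rle; lra).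
    assert (Hmy' : 2*E < m y) by nra.
    destruct (Hstep y H1 Hmy') as [y' [[Hy'1 Hy'2] Hy'3]].
    assert (Hrpos : 0 < r^n) by (apply pow_lt; lra).
    assert (Hyr : A <= y/r).
    { apply Rmult_le_reg_l with r; [lra|]. field_simplify; lra. }
    exists y'. simpl. split; [|split; [|split]].
    + destruct (le_lt_dec (S n) n0) as [Hle|Hlt].
      * assert (HR : r^(S n) <= r^n0) by (apply Rle_pow; lia || lra).
        simpl in HR.
        assert (Hy'pos : 0 < y') by lra.
        assert (y0 <= r * r^n * y').
        { assert (r^n * y <= r^n * (r*y')).
          { apply Rmult_le_compat_l; [lra|].
            apply Rmult_le_reg_l with (/r). apply Rinv_0_lt_compat; lra.
            replace (/r * (r*y')) with y' by (field; lra).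
            replace (/r * y) with (y/r) by (unfold Rdiv; ring). lra. }
          nra. }
        assert (r*A*r^n0 <= r^n0 * y') by nra.
        apply Rmult_le_reg_l with (r^n0); lra.
      * assert (Hmy'y : m y' <= y') by (apply Hmy; lra).
        assert (H2n : 2^n0 <= 2^(S n)) by (apply Rle_pow; [lra|lia]).
        assert (H2r : 2^(S n) <= (2*r)^(S n)) by (apply pow_incr; lra).
        assert (Hm0 : 0 < m y0) by lra.
        simpl in H2r, H2n.
        assert (2 * 2^n * (2*E) <= 2*r*(2*r)^n * m y0).
        { apply Rmult_le_compat; try lra. pose proof (pow_lt 2 n); lra. }
        nra.
    + nra.
    + assert (y <= r*y').
      { apply Rmult_le_reg_l with (/r). apply Rinv_0_lt_compat; lra.
        replace (/r * (r*y')) with y' by (field; lra).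
        replace (/r * y) with (y/r) by (unfold Rdiv; ring). lra. }
      nra.
    + assert (Hmy0p : 0 <= m y0) by lra. nra. }
destruct (pow2_unb (y0/(2*E))) as [n Hn].
destruct (Claim n) as [y [H1 [H2 [H3 H4]]]].
assert (Hmy'' : m y <= y) by (apply Hmy; nra).
rewrite Rpow_mult_distr in H4.
assert (Hrpos : 0 < r^n) by (apply pow_lt; lra).
assert (H5 : 2^n * m y0 <= y0).
{ apply Rmult_le_reg_l with (r^n); [lra|]. nra. }
assert (Hn' : y0 < 2^n * (2*E)).
{ apply Rmult_lt_compat_r with (r := 2*E) in Hn; [|lra].
  unfold Rdiv in Hn. rewrite Rmult_assoc, Rinv_l in Hn; lra. }
assert (2^n * (2*E) <= 2^n * m y0). { apply Rmult_le_compat_l; [pose proof (pow_lt 2 n); lra| lra]. }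
lra.
Qed.


Ltac srt := repeat (apply Sorted_cons || apply HdRel_cons || apply HdRel_nil || apply Sorted_nil); try lra.

Definition Vr f a b := real (total_variation f a b).

Lemma var_sum_nonneg f x l : 0 <= var_sum f x l.
Proof. revert x; induction l; intros x; simpl. lra. pose proof (Rabs_pos (f a - f x)). pose proof (IHl a). lra. Qed.

Lemma TV_fin f a b : a <= b -> Defs.bounded_variation f a b ->
  total_variation f a b = Finite (Vr f a b).
Proof.
intros Hab [M HM]. unfold Vr.
destruct (Lub_Rbar_correct (fun s => exists l, is_partition a b l /\ s = var_sum f a l)) as [Hub Hlub].
unfold total_variation.
assert (Hup : Rbar_le (Lub_Rbar (fun s => exists l, is_partition a b l /\ s = var_sum f a l)) (Finite M)).
{ apply Hlub. intros s [l [Hl ->]]. simpl. apply HM; exact Hl. }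
assert (Hlo : Rbar_le (Finite (var_sum f a (b :: nil))) (Lub_Rbar (fun s => exists l, is_partition a b l /\ s = var_sum f a l))).
{ apply Hub. exists (b :: nil). split; [|reflexivity]. split; [|reflexivity].
  srt. }
destruct (Lub_Rbar _); simpl in *; tauto.
Qed.

Lemma Vr_ub f a b l : a <= b -> Defs.bounded_variation f a b -> is_partition a b l -> var_sum f a l <= Vr f a b.
Proof.
intros Hab HB Hl. pose proof (TV_fin f a b Hab HB) as HT.
destruct (Lub_Rbar_correct (fun s => exists l, is_partition a b l /\ s = var_sum f a l)) as [Hub _].
unfold total_variation in HT. rewrite HT in Hub.
apply (Hub (var_sum f a l)). exists l; split; auto.
Qed.

Lemma Vr_lub f a b M : a <= b -> Defs.bounded_variation f a b -> (forall l, is_partition a b l -> var_sum f a l <= M) -> Vr f a b <= M.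
Proof.
intros Hab HB HM. pose proof (TV_fin f a b Hab HB) as HT.
destruct (Lub_Rbar_correct (fun s => exists l, is_partition a b l /\ s = var_sum f a l)) as [_ Hlub].
unfold total_variation in HT. rewrite HT in Hlub.
apply (Hlub (Finite M)). intros s [l [Hl ->]]. simpl. apply HM; auto.
Qed.

Lemma Vr_nonneg f a b : a <= b -> Defs.bounded_variation f a b -> 0 <= Vr f a b.
Proof.
intros Hab HB. eapply Rle_trans; [apply (var_sum_nonneg f a (b::nil))|].
apply Vr_ub; auto. split; [|reflexivity]. srt.
Qed.

Lemma Vr_osc f a b s t : a <= s -> s <= t -> t <= b -> Defs.bounded_variation f a b ->
  Rabs (f t - f s) <= Vr f a b.
Proof.
intros H1 H2 H3 HB.
eapply Rle_trans; [|apply (Vr_ub f a b (s :: t :: b :: nil)); auto; try lra].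
- simpl. pose proof (Rabs_pos (f s - f a)). pose proof (Rabs_pos (f b - f t)). lra.
- split; [|reflexivity]. srt.
Qed.

Lemma last_default {A} (y : A) l d d' : last (y :: l) d = last (y :: l) d'.
Proof. revert y; induction l as [|z l IH]; intros y. reflexivity. change (last (z :: l) d = last (z :: l) d'). apply IH. Qed.

Lemma var_sum_app f a l1 l2 : var_sum f a (l1 ++ l2) = var_sum f a l1 + var_sum f (last (a :: l1) a) l2.
Proof.
revert a; induction l1 as [|y l1 IH]; intros a. simpl. lra.
rewrite <- app_comm_cons.
change (var_sum f a (y :: l1 ++ l2)) with (Rabs (f y - f a) + var_sum f y (l1 ++ l2)).
change (var_sum f a (y :: l1)) with (Rabs (f y - f a) + var_sum f y l1).
change (last (a :: y :: l1) a) with (last (y :: l1) a).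
rewrite IH, (last_default y l1 a y). lra.
Qed.

Lemma last_app {A} (a : A) l1 l2 : last (a :: l1 ++ l2) a = last (last (a :: l1) a :: l2) (last (a :: l1) a).
Proof.
revert a; induction l1 as [|y l1 IH]; intros a. reflexivity.
rewrite <- app_comm_cons.
change (last (a :: y :: l1 ++ l2) a) with (last (y :: l1 ++ l2) a).
change (last (a :: y :: l1) a) with (last (y :: l1) a).
rewrite (last_default y l1 a y), (last_default y (l1 ++ l2) a y). apply IH.
Qed.

Lemma sorted_app a l1 l2 : Sorted Rle (a :: l1) -> Sorted Rle (last (a :: l1) a :: l2) -> Sorted Rle (a :: l1 ++ l2).
Proof.
revert a; induction l1 as [|y l1 IH]; intros a H1 H2. exact H2.
rewrite <- app_comm_cons.
change (last (a :: y :: l1) a) with (last (y :: l1) a) in H2.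
apply Sorted_inv in H1. destruct H1 as [H1 H1'].
constructor. apply IH. exact H1. rewrite (last_default y l1 y a). exact H2.
inversion H1'; subst. constructor. exact H0.
Qed.

Lemma Vr_super f a b c : a <= b -> b <= c -> Defs.bounded_variation f a c ->
  Defs.bounded_variation f a b -> Defs.bounded_variation f b c ->
  Vr f a b + Vr f b c <= Vr f a c.
Proof.
intros Hab Hbc HBac HBab HBbc.
cut (Vr f a b <= Vr f a c - Vr f b c). lra.
apply Vr_lub; auto. intros l1 Hl1.
cut (Vr f b c <= Vr f a c - var_sum f a l1). lra.
apply Vr_lub; auto. intros l2 Hl2.
cut (var_sum f a (l1 ++ l2) <= Vr f a c).
{ rewrite var_sum_app. destruct Hl1 as [_ Hl1]. rewrite Hl1. lra. }
apply Vr_ub; auto; try lra.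
destruct Hl1 as [S1 L1]. destruct Hl2 as [S2 L2]. split.
- apply sorted_app; auto. rewrite L1; auto.
- rewrite last_app. rewrite L1. exact L2.
Qed.


Lemma RInt_junk (g : R -> R) a b : ~ ex_RInt g a b -> RInt g a b = 0.
Proof.
intros H. unfold RInt, iota. unfold lim. simpl. unfold R_complete_lim.
match goal with |- real (Lub_Rbar ?E) = 0 => assert (Lub_Rbar E = p_infty) as HE end.
{ apply is_lub_Rbar_unique. split.
  - intros x _. simpl. exact I.
  - intros [l| |] Hl; simpl; auto.
    + specialize (Hl (l+1)). simpl in Hl. assert (l+1 <= l). apply Hl. intros y Hy. exfalso; apply H; exists y; exact Hy. lra.
    + specialize (Hl 0). simpl in Hl. apply Hl. intros y Hy. exfalso; apply H; exists y; exact Hy. }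
rewrite HE. reflexivity.
Qed.

Section S.
Variable f : R -> R.
Hypothesis Hex : forall a b, 0 < a -> a <= b -> ex_RInt f a b.
Hypothesis HBV : forall a b, 0 < a -> a <= b -> Defs.bounded_variation f a b.

Definition af := fun t => Rabs (f t).

Lemma exabs a b : 0 < a -> a <= b -> ex_RInt af a b.
Proof. intros. apply ex_RInt_Reals_1, RiemannInt_P16, ex_RInt_Reals_0, Hex; auto. Qed.

Lemma osc2 a b s t : 0 < a -> a <= s <= b -> a <= t <= b -> Rabs (f t - f s) <= Vr f a b.
Proof.
intros Ha Hs Ht. destruct (Rle_dec s t).
- apply Vr_osc; try lra. apply HBV; lra.
- rewrite Rabs_minus_sym. apply Vr_osc; try lra. apply HBV; lra.
Qed.

Lemma piece a b : 0 < a -> a <= b -> RInt af a b <= Rabs (RInt f a b) + (b - a) * Vr f a b.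
Proof.
intros Ha Hab.
assert (HV : 0 <= Vr f a b) by (apply Vr_nonneg; auto).
assert (Hba : 0 <= (b - a) * Vr f a b) by nra.
destruct (classic (forall t, a <= t <= b -> 0 <= f t)) as [Hp|Hp].
{ rewrite (RInt_ext af f). pose proof (Rle_abs (RInt f a b)). lra.
  intros x Hx. rewrite Rmin_left, Rmax_right in Hx by lra. unfold af. apply Rabs_pos_eq, Hp; lra. }
destruct (classic (forall t, a <= t <= b -> f t <= 0)) as [Hn|Hn].
{ assert (E: RInt (fun x => - f x) a b = - RInt f a b).
  { apply is_RInt_unique. exact (is_RInt_opp f a b _ (RInt_correct f a b (Hex a b Ha Hab))). }
  rewrite (RInt_ext af (fun x => - f x)). rewrite E.
  pose proof (Rle_abs (- RInt f a b)). rewrite Rabs_Ropp in H. lra.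
  intros x Hx. rewrite Rmin_left, Rmax_right in Hx by lra. unfold af. apply Rabs_left1, Hn; lra. }
apply not_all_ex_not in Hp. destruct Hp as [q Hq].
apply not_all_ex_not in Hn. destruct Hn as [p Hp].
apply imply_to_and in Hq. apply imply_to_and in Hp.
destruct Hq as [Hq1 Hq2]. destruct Hp as [Hp1 Hp2]. apply Rnot_le_lt in Hq2. apply Rnot_le_lt in Hp2.
assert (Hb : forall t, a <= t <= b -> Rabs (af t) <= Vr f a b).
{ intros t Ht. unfold af. rewrite Rabs_Rabsolu.
  pose proof (osc2 a b p t Ha Hp1 Ht). pose proof (osc2 a b q t Ha Hq1 Ht).
  destruct (Rle_dec 0 (f t)).
  - rewrite Rabs_pos_eq by lra. rewrite Rabs_pos_eq in H0 by lra. lra.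
  - rewrite Rabs_left by lra. rewrite Rabs_left in H by lra. lra. }
pose proof (abs_RInt_le_const af a b (Vr f a b) Hab (exabs a b Ha Hab) Hb).
pose proof (Rle_abs (RInt af a b)). pose proof (Rabs_pos (RInt f a b)). lra.
Qed.

Lemma split_n (A eta h : R) :
  (forall u v, A <= u -> A <= v -> Rabs (RInt f u v) <= eta) -> 0 < A -> 0 < h ->
  forall n a, A <= a -> RInt af a (a + INR n * h) <= INR n * eta + h * Vr f a (a + INR n * h).
Proof.
intros Hc HA Hh n. induction n as [|n IH]; intros a Ha.
- simpl. replace (a + 0 * h) with a by ring. rewrite RInt_point. unfold zero. simpl.
  pose proof (Vr_nonneg f a a (Rle_refl a) (HBV a a ltac:(lra) (Rle_refl a))). nra.
- rewrite S_INR.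
  set (b := a + INR n * h). set (c := a + (INR n + 1) * h).
  assert (Hn : 0 <= INR n) by apply pos_INR.
  assert (Hb : a <= b) by (unfold b; nra).
  assert (Hc' : c = b + h) by (unfold b, c; ring).
  rewrite <- (RInt_Chasles af a b c) by (apply exabs; lra).
  change (plus (RInt af a b) (RInt af b c)) with (RInt af a b + RInt af b c).
  pose proof (IH a Ha). fold b in H.
  pose proof (piece b c ltac:(lra) ltac:(lra)).
  pose proof (Hc b c ltac:(lra) ltac:(lra)).
  pose proof (Vr_super f a b c Hb ltac:(lra) (HBV a c ltac:(lra) ltac:(lra)) (HBV a b ltac:(lra) ltac:(lra)) (HBV b c ltac:(lra) ltac:(lra))).
  replace (c - b) with h in H0 by (rewrite Hc'; ring).
  assert (h * (Vr f a b + Vr f b c) <= h * Vr f a c) by (apply Rmult_le_compat_l; lra).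
  lra.
Qed.


Lemma div_le_mul y lam : 0 < y -> 1 < lam -> y / lam <= lam * y.
Proof.
intros. assert (y / lam <= y).
{ unfold Rdiv. rewrite <- (Rmult_1_r y) at 2. apply Rmult_le_compat_l; [lra|]. rewrite <- Rinv_1. apply Rinv_le_contravar; lra. }
assert (1 * y <= lam * y) by (apply Rmult_le_compat_r; lra). lra.
Qed.

Lemma gm_bound (C lam : R) :
  (forall x, 0 < x -> Rbar_le (total_variation f x (2 * x))
              (Finite (C * RInt (fun t => Rabs (f t) / t) (x / lam) (lam * x)))) ->
  0 < C -> 1 < lam -> forall y, 0 < y -> Vr f y (2*y) <= C * (lam / y) * RInt af (y/lam) (lam*y).
Proof.
intros HG HC Hl y Hy.
pose proof (HG y Hy) as H. rewrite (TV_fin f y (2*y)) in H; [| lra | apply HBV; lra]. change (Vr f y (2*y) <= C * RInt (fun t => Rabs (f t) / t) (y / lam) (lam * y)) in H.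
assert (Hyl : 0 < y / lam) by (apply Rdiv_lt_0_compat; lra).
assert (Hle : y / lam <= lam * y).
{ apply div_le_mul; lra. }
assert (H0 : 0 <= RInt af (y/lam) (lam*y)).
{ apply RInt_ge_0; auto. apply exabs; auto. intros; unfold af; apply Rabs_pos. }
destruct (classic (ex_RInt (fun t => Rabs (f t) / t) (y/lam) (lam*y))) as [Hi|Hi].
- assert (Hs : ex_RInt (fun t => lam / y * af t) (y/lam) (lam*y)).
  { exact (ex_RInt_scal af (y/lam) (lam*y) (lam/y) (exabs _ _ Hyl Hle)). }
  assert (RInt (fun t => Rabs (f t) / t) (y/lam) (lam*y) <= RInt (fun t => lam / y * af t) (y/lam) (lam*y)).
  { apply RInt_le. exact Hle. exact Hi. exact Hs.
    intros x Hx. unfold af.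
    assert (Hx0 : 0 < x) by lra.
    assert (Hix : / x <= lam / y).
    { replace (lam / y) with (/ (y / lam)) by (field; lra). apply Rinv_le_contravar; lra. }
    unfold Rdiv at 1. rewrite (Rmult_comm (Rabs (f x))). apply Rmult_le_compat_r. apply Rabs_pos. exact Hix. }
  assert (E : RInt (fun t => lam / y * af t) (y/lam) (lam*y) = lam / y * RInt af (y/lam) (lam*y)).
  { exact (RInt_scal af (y/lam) (lam*y) (lam/y) (exabs _ _ Hyl Hle)). }
  rewrite E in H1.
  assert (C * RInt (fun t => Rabs (f t) / t) (y / lam) (lam * y) <= C * (lam / y * RInt af (y / lam) (lam * y))) by (apply Rmult_le_compat_l; lra).
  lra.
- rewrite RInt_junk in H by exact Hi.
  assert (0 <= lam / y) by (apply Rlt_le, Rdiv_lt_0_compat; lra).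
  assert (0 <= C * (lam / y)) by (apply Rmult_le_pos; lra).
  assert (0 <= C * (lam / y) * RInt af (y / lam) (lam * y)) by (apply Rmult_le_pos; lra).
  rewrite Rmult_0_r in H. lra.
Qed.

Lemma chasles_af a b c : 0 < a -> a <= b -> b <= c -> RInt af a c = RInt af a b + RInt af b c.
Proof.
intros. rewrite <- (RInt_Chasles af a b c) by (apply exabs; lra). reflexivity.
Qed.

Lemma af_nonneg a b : 0 < a -> a <= b -> 0 <= RInt af a b.
Proof. intros. apply RInt_ge_0; auto. apply exabs; auto. intros; unfold af; apply Rabs_pos. Qed.

Lemma window lam r y : 1 < lam -> lam <= r -> 0 < y -> RInt af (y/lam) (lam*y) <= RInt af (y/r) (r*y).
Proof.
intros Hl Hr Hy.
assert (H1 : 0 < y / r) by (apply Rdiv_lt_0_compat; lra).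
assert (H2 : y / r <= y / lam).
{ unfold Rdiv. apply Rmult_le_compat_l; [lra|]. apply Rinv_le_contravar; lra. }
assert (H3 : y / lam <= lam * y).
{ apply div_le_mul; lra. }
assert (H4 : lam * y <= r * y) by (apply Rmult_le_compat_r; lra).
assert (H5 : 0 < lam * y) by (apply Rmult_lt_0_compat; lra).
rewrite (chasles_af (y/r) (y/lam) (r*y)) by lra.
rewrite (chasles_af (y/lam) (lam*y) (r*y)) by lra.
pose proof (af_nonneg (y/r) (y/lam) H1 H2). pose proof (af_nonneg (lam*y) (r*y) H5 H4). lra.
Qed.

Lemma blocks z : 0 < z -> forall n c, (forall j, (j < n)%nat -> RInt af (2^j*z) (2*(2^j*z)) <= c) ->
  RInt af z (2^n * z) <= INR n * c.
Proof.
intros Hz n. induction n as [|n IH]; intros c Hc.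
- simpl. replace (1*z) with z by ring. rewrite RInt_point. unfold zero; simpl. lra.
- assert (Hp : 0 < 2^n) by (apply pow_lt; lra).
  assert (Hp1 : 1 <= 2^n) by (apply pow_R1_Rle; lra).
  replace (2^(S n) * z) with (2*(2^n*z)) by (simpl; ring).
  assert (z <= 2^n*z) by (rewrite <- (Rmult_1_l z) at 1; apply Rmult_le_compat_r; lra).
  rewrite (chasles_af z (2^n*z) (2*(2^n*z))) by lra.
  rewrite S_INR.
  pose proof (IH c (fun j Hj => Hc j ltac:(lia))). pose proof (Hc n ltac:(lia)). lra.
Qed.

End S.


Lemma from_gen f L : is_RInt_gen f (at_right 0) (Rbar_locally p_infty) L ->
  (forall a b, 0 < a -> a <= b -> ex_RInt f a b) /\
  (forall eta, 0 < eta -> exists A, 0 < A /\ forall u v, A <= u -> A <= v -> Rabs (RInt f u v) <= eta).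
Proof.
intros HL. unfold is_RInt_gen, filterlimi, filter_le, filtermapi in HL.
assert (Key : forall e : posreal, exists d M, 0 < d /\ forall u v, 0 < u < d -> M < v ->
           exists y, is_RInt f u v y /\ Rabs (y - L) < e).
{ intros e. destruct (HL _ (locally_ball L e)) as [Q1 Q2 HQ1 HQ2 HP].
  destruct HQ1 as [d Hd]. destruct HQ2 as [M HM].
  exists d, M. split. apply cond_pos. intros u v Hu Hv.
  apply (HP u v). apply Hd. change (Rabs (u - 0) < d). rewrite Rminus_0_r, Rabs_pos_eq; lra. lra. apply HM; lra. }
split.
- intros a b Ha Hab. destruct (Key (mkposreal 1 Rlt_0_1)) as [d [M [Hd HP]]].
  set (u := Rmin a (d/2)). set (v := Rmax b (M+1)).
  assert (Hu : 0 < u < d) by (unfold u; split; [apply Rmin_glb_lt; lra| pose proof (Rmin_r a (d/2)); lra]).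
  assert (Hv : M < v) by (unfold v; pose proof (Rmax_r b (M+1)); lra).
  destruct (HP u v Hu Hv) as [y [Hy _]].
  assert (Hua : u <= a) by (unfold u; apply Rmin_l).
  assert (Hbv : b <= v) by (unfold v; apply Rmax_l).
  apply ex_RInt_Chasles_2 with u. lra.
  apply ex_RInt_Chasles_1 with v. lra. exists y; exact Hy.
- intros eta Heta. destruct (Key (mkposreal (eta/2) ltac:(lra))) as [d [M [Hd HP]]].
  exists (Rmax (M+1) 1). split. apply Rlt_le_trans with 1; [lra|apply Rmax_r].
  intros u v Hu Hv.
  assert (Hu' : M < u) by (pose proof (Rmax_l (M+1) 1); lra).
  assert (Hv' : M < v) by (pose proof (Rmax_l (M+1) 1); lra).
  destruct (HP (d/2) u ltac:(lra) Hu') as [yu [Hyu Hbu]].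
  destruct (HP (d/2) v ltac:(lra) Hv') as [yv [Hyv Hbv]].
  simpl in Hbu, Hbv.
  assert (Eu : ex_RInt f (d/2) u) by (exists yu; exact Hyu).
  assert (Ev : ex_RInt f (d/2) v) by (exists yv; exact Hyv).
  assert (Euv : ex_RInt f u v) by (apply ex_RInt_Chasles with (d/2); [apply ex_RInt_swap|]; assumption).
  pose proof (RInt_Chasles f (d/2) u v Eu Euv) as HC.
  change (RInt f (d/2) u + RInt f u v = RInt f (d/2) v) in HC.
  rewrite (is_RInt_unique f (d/2) u yu Hyu), (is_RInt_unique f (d/2) v yv Hyv) in HC.
  replace (RInt f u v) with (yv - yu) by lra.
  replace (yv - yu) with ((yv - L) - (yu - L)) by ring.
  eapply Rle_trans. apply Rabs_triang. rewrite Rabs_Ropp. lra.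
Qed.

Lemma final_pt f t : 0 < t -> ex_RInt f t (2*t) ->
  (forall s, t <= s <= 2*t -> Rabs (f t - f s) <= Vr f t (2*t)) ->
  Rabs (t * f t) <= Rabs (RInt f t (2*t)) + t * Vr f t (2*t).
Proof.
intros Ht Hi Hb.
assert (Hexm : ex_RInt (fun s => f t - f s) t (2*t)).
{ exact (ex_RInt_minus (fun _ => f t) f t (2*t) (ex_RInt_const t (2*t) (f t)) Hi). }
assert (E1 : RInt (fun s => f t - f s) t (2*t) = (2*t - t) * f t - RInt f t (2*t)).
{ apply is_RInt_unique. exact (is_RInt_minus (fun _ => f t) f t (2*t) _ _ (is_RInt_const t (2*t) (f t)) (RInt_correct f t (2*t) Hi)). }
pose proof (abs_RInt_le_const (fun s => f t - f s) t (2*t) (Vr f t (2*t)) ltac:(lra) Hexm Hb) as H.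
rewrite E1 in H. replace (2*t - t) with t in H by ring.
replace (t * f t) with ((t * f t - RInt f t (2*t)) + RInt f t (2*t)) by ring.
eapply Rle_trans. apply Rabs_triang. lra.
Qed.


Theorem theorem1 (f : R -> R) :
  GM f ->
  (exists L : R, is_RInt_gen f (at_right 0) (Rbar_locally p_infty) L) ->
  filterlim (fun t => t * f t) (Rbar_locally p_infty) (locally 0).
Proof.
intros [[_ [HBV Hlim]] [C [lam [HC [Hl HG]]]]] [L HL].
destruct (from_gen f L HL) as [Hex Hcau].
destruct (Hlim _ (locally_ball 0 (mkposreal 1 Rlt_0_1))) as [M1 HM1].
assert (HM1' : forall x, M1 < x -> Rabs (f x) < 1).
{ intros x Hx. pose proof (HM1 x Hx) as H. change (Rabs (f x - 0) < 1) in H. rewrite Rminus_0_r in H. exact H. }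
clear HM1.
destruct (pow2_unb lam) as [k Hk]. set (r := 2^k) in *.
assert (Hr1 : 1 < r) by lra.
set (K := (k + k)%nat).
assert (HrK : 2^K = r * r) by (unfold K, r; apply pow_add).
assert (HK0 : 0 <= INR K) by apply pos_INR.
unfold filterlim, filter_le, filtermap. intros P [eps HP].
destruct (INR_unbounded (4*C*lam*INR K*r + 1)) as [N HN].
assert (HCl : 0 < C * lam) by nra.
assert (HCK : 0 <= C*lam*INR K) by (apply Rmult_le_pos; lra).
assert (HN1 : 1 < INR N) by nra.
set (E := eps / (4*(1 + 2*C*lam*INR K))).
assert (Hden : 0 < 4*(1 + 2*C*lam*INR K)) by lra.
assert (HE : 0 < E) by (apply Rdiv_lt_0_compat; [apply cond_pos|lra]).
assert (HEe : E * (4*(1 + 2*C*lam*INR K)) = eps) by (unfold E; field; lra).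
set (eta := E / INR N).
assert (Heta : 0 < eta) by (apply Rdiv_lt_0_compat; lra).
assert (HNeta : INR N * eta = E) by (unfold eta; field; lra).
destruct (Hcau eta Heta) as [A0 [HA0 Hc]].
set (A := Rmax A0 (M1 + 1)).
assert (HA0' : A0 <= A) by apply Rmax_l.
assert (HM1A : M1 + 1 <= A) by apply Rmax_r.
assert (HA : 0 < A) by lra.
assert (Hc' : forall u v, A <= u -> A <= v -> Rabs (RInt f u v) <= eta) by (intros; apply Hc; lra).
set (m := fun y => RInt (af f) y (2*y)).
assert (Hmy : forall y, A <= y -> m y <= y).
{ intros y Hy. unfold m.
  assert (Hb : forall t, y <= t <= 2*y -> Rabs (af f t) <= 1).
  { intros t Ht. unfold af. rewrite Rabs_Rabsolu. apply Rlt_le, HM1'. lra. }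
  pose proof (abs_RInt_le_const (af f) y (2*y) 1 ltac:(lra) (exabs f Hex y (2*y) ltac:(lra) ltac:(lra)) Hb).
  pose proof (Rle_abs (RInt (af f) y (2 * y))). lra. }
assert (Hineq : forall y, r*A <= y ->
   m y <= INR N * eta + (C*lam/INR N) * RInt (af f) (y/r) (r*y)).
{ intros y Hy.
  assert (Hy0 : 0 < y) by nra.
  assert (Hh : 0 < y / INR N) by (apply Rdiv_lt_0_compat; lra).
  pose proof (split_n f Hex HBV A eta (y / INR N) Hc' HA Hh N y ltac:(nra)) as H1.
  replace (y + INR N * (y / INR N)) with (2*y) in H1 by (field; lra).
  pose proof (gm_bound f Hex HBV C lam HG ltac:(lra) Hl y Hy0) as H2.
  pose proof (window f Hex lam r y Hl ltac:(lra) Hy0) as H3.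
  assert (H4 : Vr f y (2*y) <= C * (lam / y) * RInt (af f) (y/r) (r*y)).
  { eapply Rle_trans; [exact H2|]. apply Rmult_le_compat_l; [|exact H3].
    apply Rmult_le_pos; [lra|]. apply Rlt_le, Rdiv_lt_0_compat; lra. }
  assert (H5 : y / INR N * Vr f y (2*y) <= y / INR N * (C * (lam / y) * RInt (af f) (y/r) (r*y)))
    by (apply Rmult_le_compat_l; lra).
  replace (y / INR N * (C * (lam / y) * RInt (af f) (y/r) (r*y))) with
     ((C*lam/INR N) * RInt (af f) (y/r) (r*y)) in H5 by (field; lra).
  unfold m. lra. }
assert (Hstep : forall y, r*A <= y -> 2*E < m y -> exists y', y/r <= y' <= r*y /\ 2*r*m y <= m y').
{ intros y Hy Hm.
  assert (Hy0 : 0 < y) by nra.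
  set (z := y / r).
  assert (Hz : 0 < z) by (apply Rdiv_lt_0_compat; lra).
  assert (Hzr : r * z = y) by (unfold z; field; lra).
  destruct (classic (exists j, (j < K)%nat /\ 2*r*m y <= m (2^j * z))) as [[j [Hj Hjm]]|Hno].
  - exists (2^j * z). split; [split|exact Hjm].
    + pose proof (pow_R1_Rle 2 j ltac:(lra)). change (z <= 2^j * z). rewrite <- (Rmult_1_l z) at 1. apply Rmult_le_compat_r; lra.
    + assert (2^j <= 2^K) by (apply Rle_pow; [lra|lia]).
      rewrite HrK in H. rewrite <- Hzr.
      assert (2^j * z <= r * r * z) by (apply Rmult_le_compat_r; lra). lra.
  - assert (Hall : forall j, (j < K)%nat -> RInt (af f) (2^j*z) (2*(2^j*z)) <= 2*r*m y).
    { intros j Hj. apply Rnot_lt_le. intros Hlt. apply Hno. exists j. split; [exact Hj|]. apply Rlt_le; exact Hlt. }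
    pose proof (blocks f Hex z Hz K (2*r*m y) Hall) as HB.
    replace (2^K * z) with (r*y) in HB by (rewrite HrK, <- Hzr; ring).
    pose proof (Hineq y Hy) as HI. fold z in HI.
    assert (Hm0 : 0 <= m y) by lra.
    assert (HI2 : (C*lam/INR N) * RInt (af f) z (r*y) <= (C*lam/INR N) * (INR K * (2*r*m y))).
    { apply Rmult_le_compat_l; [apply Rlt_le, Rdiv_lt_0_compat; lra | exact HB]. }
    assert (HI3 : (C*lam/INR N) * (INR K * (2*r*m y)) <= m y / 2).
    { replace ((C*lam/INR N) * (INR K * (2*r*m y))) with ((C*lam*INR K*r*4) * m y / (2 * INR N)) by (field; lra).
      apply Rmult_le_reg_r with (2 * INR N); [lra|].
      replace (C * lam * INR K * r * 4 * m y / (2 * INR N) * (2 * INR N)) with (C * lam * INR K * r * 4 * m y) by (field; lra).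
      replace (m y / 2 * (2 * INR N)) with (INR N * m y) by (field; lra).
      apply Rmult_le_compat_r; lra. }
    lra. }
destruct (chain m A E r HE ltac:(lra) HA Hmy Hstep) as [Y HY].
exists (Rmax (r*Y) (r*A) + 1). intros t Ht.
pose proof (Rmax_l (r*Y) (r*A)). pose proof (Rmax_r (r*Y) (r*A)).
assert (HtA : r*A <= t) by lra.
assert (Ht0 : 0 < t) by nra.
apply HP. change (Rabs (t * f t - 0) < eps). rewrite Rminus_0_r.
assert (Hosc : forall s, t <= s <= 2*t -> Rabs (f t - f s) <= Vr f t (2*t)).
{ intros s Hs. apply (osc2 f HBV t (2*t) s t Ht0 Hs); lra. }
pose proof (final_pt f t Ht0 (Hex t (2*t) Ht0 ltac:(lra)) Hosc) as H1.
pose proof (Hc' t (2*t) ltac:(nra) ltac:(nra)) as H2.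
pose proof (gm_bound f Hex HBV C lam HG ltac:(lra) Hl t Ht0) as H3.
pose proof (window f Hex lam r t Hl ltac:(lra) Ht0) as H4.
set (z := t / r).
assert (Hz : 0 < z) by (apply Rdiv_lt_0_compat; lra).
assert (Hzr : r * z = t) by (unfold z; field; lra).
assert (HzY : Y <= z) by (apply Rmult_le_reg_l with r; lra).
assert (Hall : forall j, (j < K)%nat -> RInt (af f) (2^j*z) (2*(2^j*z)) <= 2*E).
{ intros j Hj. apply (HY (2^j*z)). pose proof (pow_R1_Rle 2 j ltac:(lra)). nra. }
pose proof (blocks f Hex z Hz K (2*E) Hall) as HB.
replace (2^K * z) with (r*t) in HB by (rewrite HrK, <- Hzr; ring).
assert (H5 : t * Vr f t (2*t) <= C * lam * RInt (af f) (t/r) (r*t)).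
{ assert (Q1 : t * Vr f t (2*t) <= t * (C * (lam / t) * RInt (af f) (t/lam) (lam*t))) by (apply Rmult_le_compat_l; lra).
  replace (t * (C * (lam / t) * RInt (af f) (t/lam) (lam*t))) with (C*lam * RInt (af f) (t/lam) (lam*t)) in Q1 by (field; lra).
  assert (Q2 : C*lam * RInt (af f) (t/lam) (lam*t) <= C*lam*RInt (af f) (t/r) (r*t)) by (apply Rmult_le_compat_l; lra).
  lra. }
assert (H6 : C * lam * RInt (af f) (t/r) (r*t) <= C*lam*(INR K * (2*E))) by (apply Rmult_le_compat_l; [lra| exact HB]).
assert (Heta_E : eta <= E).
{ unfold eta. apply Rmult_le_reg_r with (INR N); [lra|]. replace (E / INR N * INR N) with E by (field; lra). nra. }
assert (eta + C*lam*(INR K*(2*E)) <= E * (1 + 2*C*lam*INR K)) by nra.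
assert (E * (1 + 2*C*lam*INR K) < eps).
{ rewrite <- HEe. assert (0 < E * (1 + 2*C*lam*INR K)) by (apply Rmult_lt_0_compat; lra). nra. }
lra.
Qed.
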